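(* Let $d\ge1$ and let $D_d=\bigl(\binom{d-j}{d-i}\bigr)_{1\le i,j\le d}$, with the convention $\binom{r}{s}=0$ if $s<0$ or $s>r$ (so $D_d$ is lower unitriangular). For any $0\le m\le d-1$, the $(d-m)\times(d-m)$ matrix obtained from $D_d$ by deleting its last $m$ columns and any $m$ consecutive rows has determinant $1$.
   Context: Standard binomial coefficients; the only convention is $\binom{r}{s}=0$ for $s<0$ or $s>r$ with $r\ge0$. *)

(* Defs.v *)
From mathcomp Require Import all_boot all_order all_algebra.
Set Implicit Arguments. Unset Strict Implicit. Unset Printing Implicit Defensive.
Import GRing.Theory.
Local Open Scope ring_scope.

(* Entry (i,j) of D_d, with the paper's 1-based indices 1 <= i, j <= d:
   binom(d-j, d-i).  MathComp's 'C(r, s) is 0 for s > r, matching the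
   paper's convention (here r, s >= 0 always since i, j <= d). *)
Definition Dentry (d i j : nat) : int := ('C(d - j, d - i))%:Z.

Definition Dmat (d : nat) : 'M[int]_d := \matrix_(i < d, j < d) Dentry d i.+1 j.+1.

(* 1-based original row index of the (0-based) row i of the matrix obtained by
   deleting the m consecutive rows k+1, ..., k+m (1-based) of D_d. *)
Definition kept_row (k m i : nat) : nat := if (i < k)%N then i.+1 else (i + m).+1.

(* D_d with its last m columns deleted and rows k+1..k+m deleted
   (requires k + m <= d); a (d-m) x (d-m) matrix. Columns 1..d-m are kept. *)
Definition Dminor (d m k : nat) : 'M[int]_(d - m) :=
  \matrix_(i < d - m, j < d - m) Dentry d (kept_row k m i) j.+1.

(* Main.v *)
Require Import Defs.
From mathcomp Require Import all_boot all_order all_algebra.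
From mathcomp Require Import zify.
Set Implicit Arguments. Unset Strict Implicit. Unset Printing Implicit Defensive.
Import GRing.Theory.
Lemma nat_ident (m n : nat) (i j : 'I_n) :
  'C(m + (n.-1 - j), n.-1 - i) =
  (\sum_(w < n) ((i <= w) * 'C(m, w - i) * 'C(n.-1 - j, n.-1 - w)))%N.
Proof.
have Hi := ltn_ord i.
rewrite addnC -binomial.Vandermonde.
rewrite (big_ord_widen n (fun u => 'C(n.-1 - j, u) * 'C(m, n.-1 - i - u))%N); last by lia.
rewrite big_mkcond /=.
rewrite (reindex_inj rev_ord_inj) /=.
apply: eq_bigr => w _.
have Hw := ltn_ord w.
have -> : (n - w.+1 < (n.-1 - i).+1)%N = (i <= w)%N by lia.
case: (leqP i w) => Hiw /=; last by rewrite mul0n.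
rewrite mul1n mulnC.
have -> : (n - w.+1 = n.-1 - w)%N by lia.
have -> : (n.-1 - i - (n.-1 - w))%N = (w - i)%N by lia.
by [].
Qed.

Local Open Scope ring_scope.

Definition G (d m k n : nat) : 'M[int]_n :=
  \matrix_(i < n, j < n) Dentry d (kept_row k m i) j.+1.

Lemma base (d m n : nat) : (n + m = d)%N -> \det (G d m 0 n) = 1.
Proof.
move=> Hd.
pose L : 'M[int]_n := \matrix_(i < n, w < n) (((i <= w) * 'C(m, w - i))%N)%:Z.
pose P : 'M[int]_n := \matrix_(w < n, j < n) ('C(n.-1 - j, n.-1 - w))%:Z.
have -> : G d m 0 n = L *m P.
  apply/matrixP => i j; rewrite !mxE /Dentry /kept_row /=.
  have Hi := ltn_ord i; have Hj := ltn_ord j.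
  have -> : (d - j.+1 = m + (n.-1 - j))%N by lia.
  have -> : (d - (i + m).+1 = n.-1 - i)%N by lia.
  rewrite nat_ident.
  rewrite (big_morph Posz PoszD (erefl _)).
  apply: eq_bigr => w _; rewrite !mxE.
  by rewrite PoszM.
rewrite det_mulmx -(det_tr L) !det_trig.
- rewrite !big1 ?mulr1 // => i _; rewrite !mxE ?leqnn ?subnn ?bin0 ?binn //.
- apply/is_trig_mxP => w j Hwj; rewrite !mxE bin_small //.
  have := ltn_ord j; have := ltn_ord w; lia.
- apply/is_trig_mxP => w i Hwi; rewrite !mxE.
  by rewrite leqNgt Hwi.
Qed.

Lemma main (m k : nat) : forall d n, (n + m = d)%N -> (k + m <= d)%N ->
  \det (G d m k n) = 1.
Proof.
elim: k => [|k IH] d n Hd Hk; first exact: base.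
case: n Hd Hk => [|n] Hd Hk; first lia.
case: d Hd Hk => [|d] Hd Hk; first lia.
rewrite (expand_det_row _ ord0) big_ord_recl big1 ?addr0; last first.
  move=> j _; rewrite !mxE /Dentry /kept_row /= /bump /= add1n bin_small ?mul0r //.
  have := ltn_ord j; lia.
rewrite [G _ _ _ _ _ _]mxE /Dentry /kept_row /= binn mul1r /cofactor /= expr0 mul1r.
have -> : row' ord0 (col' ord0 (G d.+1 m k.+1 n.+1)) = G d m k n.
  apply/matrixP => i j; rewrite !mxE /Dentry /kept_row /= /bump /= !add1n /= ltnS.
  by case: ifP.
apply: IH; lia.
Qed.

Theorem lemma5p11 (d m k : nat) :
  (1 <= d)%N -> (m <= d - 1)%N -> (k + m <= d)%N ->
  \det (Dminor d m k) = 1.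
Proof.
move=> H1 H2 H3.
apply: (main (n := d - m)); lia.
Qed.
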